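(* Let $\{m_k:k\ge0\}$ be positive reals with $\sum_k m_k=\infty$ and $m_k\to0$; let $S_0=0$ and $S_{k+1}=\sum_{i=0}^k m_i$. Define functions $f_j:(S_j,S_{j+1}]\to\mathbb{R}$, $j\ge0$, recursively with constants $c_0=0$ and $c_j=f_{j-1}(S_j)$ for $j\ge1$, by $$f_j(x)=\begin{cases}-x+S_j+c_j & x\in(S_j,S_j+\tfrac{m_j}{16})\\ \tfrac{8}{m_j}(x-S_j-\tfrac{m_j}{8})^2-\tfrac{3m_j}{32}+c_j & x\in[S_j+\tfrac{m_j}{16},S_j+\tfrac{3m_j}{16})\\ -\tfrac{5m_j}{16}\exp\!\big(\tfrac{5m_j/16}{x-S_j-m_j/2}+1\big)+\tfrac{m_j}{4}+c_j & x\in[S_j+\tfrac{3m_j}{16},S_j+\tfrac{m_j}{2})\\ \tfrac{m_j}{4}+c_j & x=S_j+\tfrac{m_j}{2}\\ \tfrac{5m_j}{16}\exp\!\big(\tfrac{-5m_j/16}{x-S_j-m_j/2}+1\big)+\tfrac{m_j}{4}+c_j & x\in(S_j+\tfrac{m_j}{2},S_j+\tfrac{13m_j}{16})\\ -\tfrac{8}{m_j}(x-S_j-\tfrac{7m_j}{8})^2+\tfrac{19m_j}{32}+c_j & x\in[S_j+\tfrac{13m_j}{16},S_j+\tfrac{15m_j}{16})\\ -x+S_j+\tfrac{3m_j}{2}+c_j & x\in[S_j+\tfrac{15m_j}{16},S_{j+1}].\end{cases}$$ Then for each $j\ge0$, the continuous extension of $f_j$ to $[S_j,S_{j+1}]$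 (defined at $S_j$ by $\lim_{x\downarrow S_j}f_j(x)$) is continuous on $[S_j,S_{j+1}]$, is bounded from below by $c_j-3m_j/32$ (so by $-3m_0/32$ when $j=0$), is differentiable on $[S_j,S_{j+1}]$ (with one-sided derivatives at the endpoints) with $\dot f_j(S_j)=\dot f_j(S_{j+1})=-1$, and its derivative is locally Lipschitz continuous.
   Context: $\dot f_j$ denotes the derivative of $f_j$, understood as a one-sided derivative at the endpoints of $[S_j,S_{j+1}]$. *)

(* Defs.v *)
From HB Require Import structures.
From mathcomp Require Import all_boot all_order all_algebra.
From mathcomp Require Import all_classical all_reals all_analysis.
Set Implicit Arguments. Unset Strict Implicit. Unset Printing Implicit Defensive.
Import Order.TTheory GRing.Theory Num.Theory.
Import numFieldNormedType.Exports.
Local Open Scope ring_scope.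
Local Open Scope classical_set_scope.

Section Defs.
Variable R : realType.

Definition Sseq (m : nat -> R) (k : nat) : R := \sum_(i < k) m i.

(* The piecewise formula for f_j, given the constant c_j = cj.
   Only its values on (S_j, S_{j+1}] matter; elsewhere it is set to 0. *)
Definition fpiece (m : nat -> R) (j : nat) (cj x : R) : R :=
  let mj := m j in let Sj := Sseq m j in
  if (Sj < x) && (x < Sj + mj / 16) then - x + Sj + cj
  else if (Sj + mj / 16 <= x) && (x < Sj + 3 * mj / 16) then
    8 / mj * (x - Sj - mj / 8) ^+ 2 - 3 * mj / 32 + cj
  else if (Sj + 3 * mj / 16 <= x) && (x < Sj + mj / 2) then
    - (5 * mj / 16) * expR ((5 * mj / 16) / (x - Sj - mj / 2) + 1) + mj / 4 + cj
  else if x == Sj + mj / 2 then mj / 4 + cj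
  else if (Sj + mj / 2 < x) && (x < Sj + 13 * mj / 16) then
    (5 * mj / 16) * expR ((- (5 * mj / 16)) / (x - Sj - mj / 2) + 1) + mj / 4 + cj
  else if (Sj + 13 * mj / 16 <= x) && (x < Sj + 15 * mj / 16) then
    - (8 / mj) * (x - Sj - 7 * mj / 8) ^+ 2 + 19 * mj / 32 + cj
  else if (Sj + 15 * mj / 16 <= x) && (x <= Sseq m j.+1) then
    - x + Sj + 3 * mj / 2 + cj
  else 0.

Fixpoint cseq (m : nat -> R) (j : nat) : R :=
  match j with
  | 0 => 0
  | j'.+1 => fpiece m j' (cseq m j') (Sseq m j'.+1)
  end.

Definition fj (m : nat -> R) (j : nat) (x : R) : R := fpiece m j (cseq m j) x.

Definition fext (m : nat -> R) (j : nat) (x : R) : R :=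
  if x == Sseq m j then lim (fj m j y @[y --> (Sseq m j)^'+]) else fj m j x.

End Defs.

(* Main.v *)
Require Import Defs.
From HB Require Import structures.
From mathcomp Require Import all_boot all_order all_algebra.
From mathcomp Require Import all_classical all_reals all_analysis.
From mathcomp Require Import ring lra.
Import Order.TTheory GRing.Theory Num.Theory.
Import numFieldNormedType.Exports.
Local Open Scope ring_scope.
Local Open Scope classical_set_scope.

Ltac cleanb := repeat match goal with
 | H : is_true (_ && _) |- _ => move/andP: H => [? ?]
 | H : (_ && _) = true |- _ => move/andP: H => [? ?]
 | H : (_ && _) = false |- _ => move/negbT: H; rewrite negb_and => /orP[] ?
 | H : (_ < _) = false |- _ => move/negbT: H; rewrite -leNgt => ?
 | H : (_ <= _) = false |- _ => move/negbT: H; rewrite -ltNge => ?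
 | H : (_ == _) = true |- _ => move/eqP: H => ?
 | H : is_true (_ == _) |- _ => move/eqP: H => ?
 | H : (_ == _) = false |- _ => move/negbT: H; rewrite neq_lt => /orP[] ?
 | H : is_true (~~ (_ < _)) |- _ => move: H; rewrite -leNgt => ?
 | H : is_true (~~ (_ <= _)) |- _ => move: H; rewrite -ltNge => ?
 end.

Ltac normR R := repeat match goal with
 | H : is_true (@Order.lt _ _ ?a ?b) |- _ =>
     let H' := fresh in have H' : (a < b :> R) := H; clear H; revert H'
 | H : is_true (@Order.le _ _ ?a ?b) |- _ =>
     let H' := fresh in have H' : (a <= b :> R) := H; clear H; revert H'
 | H : @eq _ ?a ?b |- _ =>
     let H' := fresh in have H' : (a = b :> R) := H; clear H; revert H'
 end; intros.

Section Gen.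
Variable R : realType.
Implicit Types (f : R -> R) (x l : R).

Definition quot f x := fun h : R => h^-1 * (f (x + h) - f x).

Lemma quot_is_derive f x l : quot f x h @[h --> 0^'] --> l -> is_derive x 1 f l.
Proof.
move=> H.
have E : (fun h : R => h^-1 *: ((f \o shift x) (h *: 1) - f x)) = quot f x.
  by apply/funext => h; rewrite /quot /= [h%:A]mulr1 (addrC h x).
split; rewrite /derivable /derive E; first by apply/cvg_ex; exists l.
exact: cvg_lim.
Qed.

Lemma is_derive_quot f x l : is_derive x 1 f l -> quot f x h @[h --> 0^'] --> l.
Proof.
move=> [d v].
have E : (fun h : R => h^-1 *: ((f \o shift x) (h *: 1) - f x)) = quot f x.
  by apply/funext => h; rewrite /quot /= [h%:A]mulr1 (addrC h x).
move: d v; rewrite /derivable /derive E => d <-; exact: d.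
Qed.

Lemma my_rl_dnbhs (f : R -> R) (p : R) (l : R) :
  f x @[x --> p^'+] --> l -> f x @[x --> p^'-] --> l ->
  f x @[x --> p^'] --> l.
Proof.
move=> /cvgrPdist_le fppl /cvgrPdist_le fpnl; apply/cvgrPdist_le => e e0.
have {fppl}[a /= a0 fppl] := fppl _ e0.
have {fpnl}[b /= b0 fpnl] := fpnl _ e0.
near=> t.
have : t != p by near: t; exact: nbhs_dnbhs_neq.
rewrite neq_lt => /orP[tp|pt].
- apply: fpnl => //=; near: t.
  exists (b / 2) => //=; first by rewrite divr_gt0.
  move=> z/= + _ => /lt_le_trans; apply.
  by rewrite ler_pdivrMr// ler_pMr// ler1n.
- apply: fppl =>//=; near: t.
  exists (a / 2) => //=; first by rewrite divr_gt0.
  move=> z/= + _ => /lt_le_trans; apply.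
  by rewrite ler_pdivrMr// ler_pMr// ler1n.
Unshelve. all: by end_near. Qed.

Lemma junction f x l :
  quot f x h @[h --> 0^'-] --> l -> quot f x h @[h --> 0^'+] --> l -> is_derive x 1 f l.
Proof. by move=> H1 H2; apply: quot_is_derive; exact: my_rl_dnbhs H2 H1. Qed.

Lemma left_quot f p x l e : 0 < e -> (forall y, x - e < y <= x -> f y = p y) ->
  is_derive x 1 p l -> quot f x h @[h --> 0^'-] --> l.
Proof.
move=> e0 fp /is_derive_quot /cvg_dnbhs_at_left; apply: cvg_trans.
apply: near_eq_cvg; near=> h.
have h0 : h < 0 by near: h; exact: nbhs_left_lt.
have he : - e < h.
  near: h; apply: nbhs_left_gt; lra.
rewrite /quot !fp //; lra.
Unshelve. all: by end_near. Qed.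

Lemma right_quot f p x l e : 0 < e -> (forall y, x <= y < x + e -> f y = p y) ->
  is_derive x 1 p l -> quot f x h @[h --> 0^'+] --> l.
Proof.
move=> e0 fp /is_derive_quot /cvg_dnbhs_at_right; apply: cvg_trans.
apply: near_eq_cvg; near=> h.
have h0 : 0 < h by near: h; exact: nbhs_right_gt.
have he : h < e.
  near: h; apply: nbhs_right_lt; lra.
rewrite /quot !fp //; lra.
Unshelve. all: by end_near. Qed.


Lemma near_region (A B x : R) (f g : R -> R) : A < x < B ->
  (forall y, A < y < B -> f y = g y) -> \forall y \near x, f y = g y.
Proof.
move=> hx H; have := @near_in_itvoo R A B x; rewrite in_itv /= => /(_ hx).
by apply: filterS => y; rewrite in_itv /=; exact: H.
Qed.

Lemma cvg0_bound (F : set_system R) (FF : Filter F) (f : R -> R) (C : R) :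
  0 < C -> (fun h : R => h) @ F --> (0:R) ->
  (\forall h \near F, `|f h| <= C * `|h|) -> f @ F --> (0:R).
Proof.
move=> C0 /cvgrPdist_lt Hid Hb; apply/cvgrPdist_le => e e0.
have := Hid (e / C) (divr_gt0 e0 C0).
apply: filter_app; apply: filterS Hb => h hb hh.
rewrite sub0r normrN (le_trans hb) //.
rewrite sub0r normrN in hh.
by rewrite -ler_pdivlMl // mulrC ltW.
Qed.

End Gen.

Section Shape.
Variable R : realType.
Variables (S m c : R).
Hypothesis hm : 0 < m.

Local Notation k := (5 * m / 16).
Local Notation x0 := (S + m / 2).
Local Notation p1 := (fun x : R => - x + S + c).
Local Notation p2 := (fun x : R => 8 / m * (x - S - m / 8) ^+ 2 - 3 * m / 32 + c).
Local Notation p3 := (fun x : R =>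
  - (5 * m / 16) * expR ((5 * m / 16) / (x - S - m / 2) + 1) + m / 4 + c).
Local Notation p5 := (fun x : R =>
  (5 * m / 16) * expR ((- (5 * m / 16)) / (x - S - m / 2) + 1) + m / 4 + c).
Local Notation p6 := (fun x : R => - (8 / m) * (x - S - 7 * m / 8) ^+ 2 + 19 * m / 32 + c).
Local Notation p7 := (fun x : R => - x + S + 3 * m / 2 + c).

Definition G x :=
  if x < S + m / 16 then p1 x
  else if x < S + 3 * m / 16 then p2 x
  else if x < S + m / 2 then p3 x
  else if x == S + m / 2 then m / 4 + c
  else if x < S + 13 * m / 16 then p5 x
  else if x < S + 15 * m / 16 then p6 x
  else p7 x.

Definition Hf (t : R) := (k / t) ^+ 2 * expR (1 - k / t).

Definition dG x :=
  if x < S + m / 16 then -1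
  else if x < S + 3 * m / 16 then 16 / m * (x - S - m / 8)
  else if x < S + 13 * m / 16 then Hf `|x - S - m / 2|
  else if x < S + 15 * m / 16 then - (16 / m) * (x - S - 7 * m / 8)
  else -1.

Ltac gcase := rewrite /G /dG; repeat (case: ifP => ?); cleanb; normR R; try by [].

Lemma G1 y : y < S + m / 16 -> G y = p1 y.
Proof. move=> ?; gcase; lra. Qed.
Lemma G2 y : S + m / 16 <= y < S + 3 * m / 16 -> G y = p2 y.
Proof. move=> /andP[? ?]; gcase; lra. Qed.
Lemma G3 y : S + 3 * m / 16 <= y < S + m / 2 -> G y = p3 y.
Proof. move=> /andP[? ?]; gcase; lra. Qed.
Lemma G4 : G x0 = m / 4 + c.
Proof. gcase; lra. Qed.
Lemma G5 y : S + m / 2 < y < S + 13 * m / 16 -> G y = p5 y.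
Proof. move=> /andP[? ?]; gcase; lra. Qed.
Lemma G6 y : S + 13 * m / 16 <= y < S + 15 * m / 16 -> G y = p6 y.
Proof. move=> /andP[? ?]; gcase; lra. Qed.
Lemma G7 y : S + 15 * m / 16 <= y -> G y = p7 y.
Proof. move=> ?; gcase; lra. Qed.


Ltac neq0 := apply/eqP => ?; normR R; lra.
Ltac sclean := rewrite -?[_ *: _]/(_ * _) /=.

Lemma dp1 (x : R) : is_derive x 1 p1 (-1).
Proof. apply: is_derive_eq; sclean; ring. Qed.
Lemma dp7 (x : R) : is_derive x 1 p7 (-1).
Proof. apply: is_derive_eq; sclean; ring. Qed.
Lemma dp2 (x : R) : is_derive x 1 p2 (16 / m * (x - S - m / 8)).
Proof. apply: is_derive_eq; sclean; field; neq0. Qed.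
Lemma dp6 (x : R) : is_derive x 1 p6 (- (16 / m) * (x - S - 7 * m / 8)).
Proof. apply: is_derive_eq; sclean; field; neq0. Qed.
Lemma dp3 (x : R) : x < x0 -> is_derive x 1 p3 (Hf `|x - S - m / 2|).
Proof.
move=> hx; have hu : x - S - m / 2 != 0 by neq0.
apply: is_derive_eq; sclean; rewrite /Hf ltr0_norm; last lra.
have -> : 1 - 5 * m / 16 / - (x - S - m / 2) = 5 * m / 16 / (x - S - m / 2) + 1.
  by rewrite invrN mulrN opprK addrC.
field; neq0.
Qed.
Lemma dp5 (x : R) : x0 < x -> is_derive x 1 p5 (Hf `|x - S - m / 2|).
Proof.
move=> hx; have hu : x - S - m / 2 != 0 by neq0.
apply: is_derive_eq; sclean; rewrite /Hf gtr0_norm; last lra.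
have -> : 1 - 5 * m / 16 / (x - S - m / 2) = - (5 * m / 16) / (x - S - m / 2) + 1.
  by rewrite mulNr addrC.
field; neq0.
Qed.

Ltac dcase := rewrite /dG; repeat (case: ifP => ?); cleanb; normR R; try by [].
Ltac lr := normR R; lra.
Ltac ab := apply/andP; split; lr.
Ltac fld := field; try (repeat (apply/andP; split); neq0).

Lemma dG1 y : y < S + m / 16 -> dG y = -1.
Proof. move=> ?; dcase; lra. Qed.
Lemma dG2 y : S + m / 16 <= y < S + 3 * m / 16 -> dG y = 16 / m * (y - S - m / 8).
Proof. move=> /andP[? ?]; dcase; lra. Qed.
Lemma dG3 y : S + 3 * m / 16 <= y < S + 13 * m / 16 -> dG y = Hf `|y - S - m / 2|.
Proof. move=> /andP[? ?]; dcase; lra. Qed.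
Lemma dG4 y : S + 13 * m / 16 <= y < S + 15 * m / 16 ->
  dG y = - (16 / m) * (y - S - 7 * m / 8).
Proof. move=> /andP[? ?]; dcase; lra. Qed.
Lemma dG5 y : S + 15 * m / 16 <= y -> dG y = -1.
Proof. move=> ?; dcase; lra. Qed.

Lemma HfK : Hf k = 1.
Proof.
rewrite /Hf divff; last neq0.
by rewrite expr1n mul1r subrr expR0.
Qed.
Lemma Hf0 : Hf 0 = 0.
Proof. by rewrite /Hf invr0 mulr0 expr0n /= mul0r. Qed.

Lemma sexp_bound (s : R) : 0 < s -> s * expR (1 - s) <= 2 * expR 1 / s.
Proof.
move=> s0.
have E := expR_ge1Dxn 1 (ltW s0).
have e0 := expR_gt0 s; have e1 := expR_gt0 (1 : R).
rewrite expRB -subr_ge0.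
have -> : 2 * expR 1 / s - s * (expR 1 / expR s) =
   expR 1 * (2 * expR s - s ^+ 2) / (s * expR s).
  by field; apply/andP; split; neq0.
apply: divr_ge0; last by apply: mulr_ge0; lra.
apply: mulr_ge0; first lra.
move: E; rewrite (_ : 2`!%:R = 2 :> R) // => E.
have : s ^+ 2 / 2 <= expR s by lra.
move=> H; have : s ^+ 2 <= 2 * expR s.
  by move: H; rewrite ler_pdivrMr //; lra.
lra.
Qed.

Lemma G_deriv (x : R) : is_derive x 1 G (dG x).
Proof.
case: (ltgtP x (S + m / 16)) => h1.
- rewrite dG1 //; apply: near_eq_is_derive (dp1 x).
  apply: (@near_region R (x - 1) (S + m / 16)); first ab.
  by move=> y /andP[_ ?]; rewrite G1.
- case: (ltgtP x (S + 3 * m / 16)) => h2.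
  + rewrite dG2; last ab. apply: near_eq_is_derive (dp2 x).
    apply: (@near_region R (S + m / 16) (S + 3 * m / 16)); first ab.
    by move=> y /andP[? ?]; rewrite G2 //; ab.
  + case: (ltgtP x (S + m / 2)) => h3.
    * rewrite dG3; last ab. apply: near_eq_is_derive (@dp3 x h3).
      apply: (@near_region R (S + 3 * m / 16) (S + m / 2)); first ab.
      by move=> y /andP[? ?]; rewrite G3 //; ab.
    * case: (ltgtP x (S + 13 * m / 16)) => h4.
      - rewrite dG3; last ab. apply: near_eq_is_derive (@dp5 x h3).
        apply: (@near_region R (S + m / 2) (S + 13 * m / 16)); first ab.
        by move=> y /andP[? ?]; rewrite G5 //; ab.
      - case: (ltgtP x (S + 15 * m / 16)) => h5.
        + rewrite dG4; last ab. apply: near_eq_is_derive (dp6 x).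
          apply: (@near_region R (S + 13 * m / 16) (S + 15 * m / 16)); first ab.
          by move=> y /andP[? ?]; rewrite G6 //; ab.
        + rewrite dG5; last lr. apply: near_eq_is_derive (dp7 x).
          apply: (@near_region R (S + 15 * m / 16) (x + 1)); first ab.
          by move=> y /andP[? ?]; rewrite G7 //; lr.
        + rewrite h5; apply: junction.
          ** apply: (@left_quot R G p6 _ _ (m / 8)); first lr.
               move=> y /andP[? ?]; case: (ltP y (S + 15 * m / 16)) => hy.
                 by rewrite G6 //; ab.
               have -> : y = S + 15 * m / 16 by lr.
               rewrite G7; last lr.
               fld.
             apply: (is_derive_eq (dp6 _)); rewrite dG5; last lr.
             fld.
          ** apply: (@right_quot R G p7 _ _ 1); first lr.
               by move=> y /andP[? ?]; rewrite G7 //; lr.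
             rewrite dG5; last lr.
             exact: dp7.
      - rewrite h4; apply: junction.
        + apply: (@left_quot R G p5 _ _ (5 * m / 16)); first lr.
            move=> y /andP[? ?]; case: (ltP y (S + 13 * m / 16)) => hy.
              by rewrite G5 //; ab.
            have -> : y = S + 13 * m / 16 by lr.
            rewrite G6; last ab.
            have -> : - (5 * m / 16) / (S + 13 * m / 16 - S - m / 2) + 1 = 0 by fld.
            rewrite expR0; fld.
          have D5 : S + m / 2 < S + 13 * m / 16 by lr.
          apply: (is_derive_eq (@dp5 _ D5)).
          rewrite dG4; last ab.
          have -> : S + 13 * m / 16 - S - m / 2 = k by fld.
          rewrite gtr0_norm; last lr.
          rewrite HfK; fld.
        + apply: (@right_quot R G p6 _ _ (m / 8)); first lr.
            by move=> y /andP[? ?]; rewrite G6 //; ab.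
          rewrite dG4; last ab.
          exact: dp6.
    * rewrite h3.
      have -> : dG (S + m / 2) = 0.
        rewrite dG3; last ab.
        have -> : S + m / 2 - S - m / 2 = 0 by ring.
        by rewrite normr0 Hf0.
      have C0 : 0 < 2 * expR 1 / k.
        apply: divr_gt0; last lr.
        apply: mulr_gt0; [lr | exact: expR_gt0].
      apply: junction.
      - apply: (@cvg0_bound _ _ _ _ _ C0).
          by apply: cvg_at_left_filter; exact: cvg_id.
        near=> h.
        have hneg : h < 0 by near: h; exact: nbhs_left_lt.
        have hk : - k < h by near: h; apply: nbhs_left_gt; lr.
        rewrite /quot G4 G3; last ab.
        have -> : 5 * m / 16 / (S + m / 2 + h - S - m / 2) + 1 =
          1 - (- (5 * m / 16) / h) by fld.
        set s := - (5 * m / 16) / h.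
        have s0 : 0 < s.
          have -> : s = k / - h by rewrite /s; fld.
          apply: divr_gt0; lr.
        have -> : h^-1 * (- (5 * m / 16) * expR (1 - s) + m / 4 + c - (m / 4 + c))
          = s * expR (1 - s) by rewrite /s; fld.
        rewrite ger0_norm; last by apply: mulr_ge0; [lr | exact: expR_ge0].
        apply: le_trans (sexp_bound s s0) _.
        rewrite ltr0_norm //.
        have -> : 2 * expR 1 / s = 2 * expR 1 / k * - h by rewrite /s; fld.
        exact: lexx.
      - apply: (@cvg0_bound _ _ _ _ _ C0).
          by apply: cvg_at_right_filter; exact: cvg_id.
        near=> h.
        have hpos : 0 < h by near: h; exact: nbhs_right_gt.
        have hk : h < k by near: h; apply: nbhs_right_lt; lr.
        rewrite /quot G4 G5; last ab.
        have -> : - (5 * m / 16) / (S + m / 2 + h - S - m / 2) + 1 =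
          1 - (5 * m / 16) / h by fld.
        set s := (5 * m / 16) / h.
        have s0 : 0 < s by apply: divr_gt0; lr.
        have -> : h^-1 * (5 * m / 16 * expR (1 - s) + m / 4 + c - (m / 4 + c))
          = s * expR (1 - s) by rewrite /s; fld.
        rewrite ger0_norm; last by apply: mulr_ge0; [lr | exact: expR_ge0].
        apply: le_trans (sexp_bound s s0) _.
        rewrite gtr0_norm //.
        have -> : 2 * expR 1 / s = 2 * expR 1 / k * h by rewrite /s; fld.
        exact: lexx.
  + rewrite h2; apply: junction.
    * apply: (@left_quot R G p2 _ _ (m / 8)); first lr.
        move=> y /andP[? ?]; case: (ltP y (S + 3 * m / 16)) => hy.
          by rewrite G2 //; ab.
        have -> : y = S + 3 * m / 16 by lr.
        rewrite G3; last ab.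
        have -> : 5 * m / 16 / (S + 3 * m / 16 - S - m / 2) + 1 = 0 by fld.
        rewrite expR0; fld.
      apply: (is_derive_eq (dp2 _)); rewrite dG3; last ab.
      have -> : S + 3 * m / 16 - S - m / 2 = - k by fld.
      rewrite normrN gtr0_norm; last lr.
      rewrite HfK; fld.
    * apply: (@right_quot R G p3 _ _ (5 * m / 16)); first lr.
        by move=> y /andP[? ?]; rewrite G3 //; ab.
      rewrite dG3; last ab.
      apply: dp3; lr.
- rewrite h1; apply: junction.
  + apply: (@left_quot R G p1 _ _ (m / 16)); first by normR R; lr.
      move=> y /andP[? ?]; case: (ltP y (S + m / 16)) => hy.
        by rewrite G1.
      have -> : y = S + m / 16 by lr.
      rewrite G2; last ab.
      fld.
    apply: (is_derive_eq (dp1 _)); rewrite dG2; last ab.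
    fld.
  + apply: (@right_quot R G p2 _ _ (m / 16)); first lr.
      by move=> y /andP[? ?]; rewrite G2 //; ab.
    rewrite dG2; last ab.
    exact: dp2.
Unshelve. all: by end_near.
Qed.

End Shape.

Section Lip.
Variable R : realType.

Definition lip (A B : R) (F : R -> R) (L : R) := forall y z, A <= y <= B -> A <= z <= B ->
  `|F y - F z| <= L * `|y - z|.

Ltac lr := normR R; lra.

Lemma lip_chain A B C F L : A <= B <= C -> lip A B F L -> lip B C F L -> lip A C F L.
Proof.
move=> /andP[hab hbc] H1 H2 y z /andP[? ?] /andP[? ?].
have cross : forall u v, A <= u <= B -> B <= v <= C ->
    `|F u - F v| <= L * `|u - v|.
  move=> u v hu hv.
  have T := ler_distD (F B) (F u) (F v).
  have -> : `|u - v| = `|u - B| + `|B - v|.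
    rewrite !ler0_norm; [lr|lr|lr|lr].
  rewrite mulrDr; apply: le_trans T _; apply: lerD.
    apply: H1 => //; lr.
  apply: H2 => //; lr.
case: (leP y B) => hy; case: (leP z B) => hz.
- apply: H1; lr.
- apply: cross; lr.
- rewrite distrC [`|y - z|]distrC; apply: cross; lr.
- apply: H2; lr.
Qed.

Lemma lip_ext A B F F' L : (forall y, A <= y <= B -> F y = F' y) -> lip A B F' L -> lip A B F L.
Proof. by move=> E H y z hy hz; rewrite !E //; apply: H. Qed.

Lemma lip_mono A B F L L' : L <= L' -> lip A B F L -> lip A B F L'.
Proof.
move=> hL H y z hy hz; apply: le_trans (H y z hy hz) _.
by apply: ler_wpM2r.
Qed.

Lemma lip_lin A B a d : lip A B (fun y => a * (y - d)) `|a|.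
Proof.
move=> y z _ _; have -> : a * (y - d) - a * (z - d) = a * (y - z) by ring.
by rewrite normrM.
Qed.

Lemma lip_cst A B (a : R) : lip A B (fun _ => a) 0.
Proof. by move=> y z _ _; rewrite subrr normr0 mul0r. Qed.

End Lip.
Arguments lip {R}.
Arguments lip_mono {R A B F L L'}.
Arguments lip_cst {R} A B a.
Arguments lip_lin {R} A B a d.

Section Der.
Variable R : realType.
Implicit Types (f g : R -> R) (x a b : R).
Lemma dC x (c : R) : is_derive x 1 (fun _ : R => c) 0.
Proof. exact: is_derive_cst. Qed.
Lemma dId x : is_derive x 1 (fun y : R => y) 1.
Proof. exact: is_derive_id. Qed.
Lemma dD f g x a b : is_derive x 1 f a -> is_derive x 1 g b ->
  is_derive x 1 (fun y => f y + g y) (a + b).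
Proof. move=> H1 H2; have := is_deriveD H1 H2; by []. Qed.
Lemma dN f x a : is_derive x 1 f a -> is_derive x 1 (fun y => - f y) (- a).
Proof. move=> H1; have := is_deriveN H1; by []. Qed.
Lemma dB f g x a b : is_derive x 1 f a -> is_derive x 1 g b ->
  is_derive x 1 (fun y => f y - g y) (a - b).
Proof. move=> H1 H2; have := is_deriveB H1 H2; by []. Qed.
Lemma dM f g x a b : is_derive x 1 f a -> is_derive x 1 g b ->
  is_derive x 1 (fun y => f y * g y) (f x * b + g x * a).
Proof. move=> H1 H2; have := is_deriveM H1 H2; by []. Qed.
Lemma dComp f g x a b : is_derive (g x) 1 f a -> is_derive x 1 g b ->
  is_derive x 1 (fun y => f (g y)) (a * b).
Proof. move=> H1 H2; have := is_derive1_comp H1 H2; by []. Qed.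
Lemma dV g x b : g x != 0 -> is_derive x 1 g b ->
  is_derive x 1 (fun y => (g y)^-1) (- (g x) ^- 2 * b).
Proof. move=> H1 H2; have := is_deriveV H1 H2; by []. Qed.
Lemma dExp g x b : is_derive x 1 g b ->
  is_derive x 1 (fun y => expR (g y)) (expR (g x) * b).
Proof. move=> H; apply: (@dComp expR g x (expR (g x)) b _ H). Qed.
Arguments dExp {g x b}.
Arguments dD {f g x a b}. Arguments dN {f x a}. Arguments dB {f g x a b}.
Arguments dM {f g x a b}. Arguments dComp {f g x a b}. Arguments dV {g x b}.
Lemma dX2 g x b : is_derive x 1 g b ->
  is_derive x 1 (fun y => (g y)^+2) (2 * g x * b).
Proof.
move=> H; have -> : (fun y => g y ^+ 2) = (fun y => g y * g y).
  by apply/funext => y; rewrite expr2.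
apply: (is_derive_eq (dM H H)); ring.
Qed.

Arguments dX2 {g x b}. Arguments dC {x c}. Arguments dId {x}.
End Der.

Section HfLip.
Variable R : realType.
Variable m : R.
Hypothesis hm : 0 < m.
Local Notation k := (5 * m / 16).
Ltac lr := normR R; lra.
Ltac neq0 := apply/eqP => ?; normR R; lra.
Ltac fld := field; try (repeat (apply/andP; split); neq0).

Lemma pexp (s : R) (n : nat) : 0 <= s -> s ^+ n.+1 * expR (1 - s) <= n.+1`!%:R * expR 1.
Proof.
move=> s0.
have E := expR_ge1Dxn n s0.
have F0 : 0 < n.+1`!%:R :> R by rewrite ltr0n fact_gt0.
have e0 := expR_gt0 s; have e1 := expR_gt0 (1 : R).
set F := n.+1`!%:R in E F0 *.
have h1 : s ^+ n.+1 / F <= expR s by lra.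
rewrite ler_pdivrMr // in h1.
rewrite expRB -subr_ge0.
have -> : F * expR 1 - s ^+ n.+1 * (expR 1 / expR s) =
   expR 1 * (F * expR s - s ^+ n.+1) / expR s.
  by field; neq0.
apply: divr_ge0; last lra.
apply: mulr_ge0; lra.
Qed.

Definition dH (t : R) := expR (1 - k / t) * ((k / t) ^+ 4 - 2 * (k / t) ^+ 3) / k.

Lemma Hf_deriv (t : R) : 0 < t -> is_derive t 1 (Hf R m) (dH t).
Proof.
move=> t0; have tn : t != 0 by neq0.
rewrite /Hf /dH; have : 5 * m / 16 != 0 by neq0.
move: (5 * m / 16) => K hK.
apply: is_derive_eq.
  by eapply dM; [eapply dX2; eapply dM; [eapply dC | eapply dV; [exact tn | eapply dId]] | eapply dExp; eapply dB; [eapply dC | eapply dM; [eapply dC | eapply dV; [exact tn | eapply dId]]]].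
rewrite /=.
by field; apply/andP; split.
Qed.

Definition LH := 36 * expR 1 / k.

Lemma LH_ge0 : 0 <= LH.
Proof. rewrite /LH; apply: divr_ge0; [apply: mulr_ge0; [lr|exact: expR_ge0] | lr]. Qed.

Lemma dH_bound (t : R) : 0 < t -> `|dH t| <= LH.
Proof.
move=> t0.
set s := k / t.
have s0 : 0 < s by apply: divr_gt0; lr.
have A := @pexp s 3 (ltW s0); have B := @pexp s 2 (ltW s0).
rewrite (_ : 3.+1`!%:R = 24 :> R) // in A.
rewrite (_ : 2.+1`!%:R = 6 :> R) // in B.
have -> : dH t = (s ^+ 4 * expR (1 - s) - 2 * (s ^+ 3 * expR (1 - s))) / k.
  rewrite /dH /s; fld.
rewrite /LH normrM normfV (gtr0_norm (_ : 0 < k)); last lr.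
rewrite ler_pM2r; last by rewrite invr_gt0; lr.
have e1 := expR_gt0 (1 : R).
have P1 : 0 <= s ^+ 4 * expR (1 - s) by apply: mulr_ge0; [exact: exprn_ge0 (ltW s0)| exact: expR_ge0].
have P2 : 0 <= s ^+ 3 * expR (1 - s) by apply: mulr_ge0; [exact: exprn_ge0 (ltW s0)| exact: expR_ge0].
rewrite ler_norml; apply/andP; split; lra.
Qed.

Lemma Hf_lt (t1 t2 : R) : 0 <= t1 < t2 -> `|Hf R m t2 - Hf R m t1| <= LH * (t2 - t1).
Proof.
move=> /andP[h1 h2].
case: (ltgtP t1 0) => ht1; first lr.
- have D : forall x, x \in `]t1, t2[%R -> is_derive x 1 (Hf R m) (dH x).
    move=> x; rewrite in_itv /= => /andP[hx _]; apply: Hf_deriv; lr.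
  have Cc : {within `[t1, t2], continuous (Hf R m)}.
    apply: derivable_within_continuous => x; rewrite in_itv /= => /andP[hx _].
    have hx' : 0 < x by lr.
    by case: (@Hf_deriv x hx').
  have [c0 c1 c2] := MVT h2 D Cc.
  rewrite c2 normrM (gtr0_norm (_ : 0 < t2 - t1)); last lr.
  apply: ler_wpM2r; first lr.
  apply: dH_bound; move: c1; rewrite in_itv /= => /andP[? ?]; lr.
- rewrite ht1 subr0 /Hf invr0 mulr0 expr0n /= mul0r subr0.
  set s := k / t2.
  have s0 : 0 < s by apply: divr_gt0; lr.
  have B := @pexp s 2 (ltW s0).
  rewrite (_ : 2.+1`!%:R = 6 :> R) // in B.
  have P : 0 <= s ^+ 2 * expR (1 - s) by apply: mulr_ge0; [exact: exprn_ge0 (ltW s0)| exact: expR_ge0].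
  rewrite ger0_norm //.
  have -> : s ^+ 2 * expR (1 - s) = (s ^+ 3 * expR (1 - s)) / s by rewrite /s; fld.
  have -> : LH * t2 = 36 * expR 1 / s by rewrite /LH /s; fld.
  rewrite ler_pM2r; last by rewrite invr_gt0.
  have e1 := expR_gt0 (1 : R); lra.
Qed.

Lemma Hf_lip : lip (0 : R) k (Hf R m) LH.
Proof.
move=> y z /andP[? ?] /andP[? ?].
case: (ltgtP y z) => hyz.
- rewrite distrC [`|y - z|]distrC (gtr0_norm (_ : 0 < z - y)); last lr.
  apply: Hf_lt; apply/andP; split; lr.
- rewrite (gtr0_norm (_ : 0 < y - z)); last lr.
  apply: Hf_lt; apply/andP; split; lr.
- by rewrite hyz !subrr normr0 mulr0.
Qed.

End HfLip.

Section Fin.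
Variable R : realType.
Variables (S m c : R).
Hypothesis hm : 0 < m.
Local Notation k := (5 * m / 16).
Ltac lr := normR R; lra.
Ltac neq0 := apply/eqP => ?; normR R; lra.
Ltac fld := field; try (repeat (apply/andP; split); neq0).
Ltac ab := apply/andP; split; lr.

Lemma LH_ge0' : 0 <= LH R m.
Proof. rewrite /LH; apply: divr_ge0; [apply: mulr_ge0; [lr|exact: expR_ge0] | lr]. Qed.

Lemma dG_lip : lip S (S + m) (dG R S m) (16 / m + LH R m).
Proof.
have L0 := LH_ge0'.
have m16 : 0 < 16 / m by apply: divr_gt0; lr.
have HL : 0 <= 16 / m + LH R m by lr.
apply: (@lip_chain R _ (S + m / 16)); first ab.
  apply: (@lip_ext R _ _ _ (fun _ => -1)); last exact: (lip_mono HL (lip_cst _ _ _)).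
  move=> y /andP[? ?]; case: (ltP y (S + m / 16)) => hy.
    by rewrite (@dG1 R S m hm).
  have -> : y = S + m / 16 by lr.
  rewrite (@dG2 R S m hm); [fld | ab].
apply: (@lip_chain R _ (S + 3 * m / 16)); first ab.
  apply: (@lip_ext R _ _ _ (fun y => 16 / m * (y - (S + m / 8)))).
    move=> y /andP[? ?]; case: (ltP y (S + 3 * m / 16)) => hy.
      rewrite (@dG2 R S m hm); [ring | ab].
    have -> : y = S + 3 * m / 16 by lr.
    rewrite (@dG3 R S m hm); last ab.
    have -> : S + 3 * m / 16 - S - m / 2 = - k by fld.
    rewrite normrN gtr0_norm; last lr.
    rewrite (@HfK R m hm); fld.
  apply: lip_mono (lip_lin _ _ _ _).
  rewrite gtr0_norm //; lr.
apply: (@lip_chain R _ (S + 13 * m / 16)); first ab.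
  apply: (@lip_ext R _ _ _ (fun y => Hf R m `|y - S - m / 2|)).
    move=> y /andP[? ?]; case: (ltP y (S + 13 * m / 16)) => hy.
      rewrite (@dG3 R S m hm) //; ab.
    have -> : y = S + 13 * m / 16 by lr.
    rewrite (@dG4 R S m hm); last ab.
    have -> : S + 13 * m / 16 - S - m / 2 = k by fld.
    rewrite gtr0_norm; last lr.
    rewrite (@HfK R m hm); fld.
  apply: (@lip_mono R _ _ _ (LH R m)); first lr.
  move=> y z /andP[? ?] /andP[? ?].
  have Hy : 0 <= `|y - S - m / 2| <= k.
    apply/andP; split; first exact: normr_ge0.
    rewrite ler_norml; ab.
  have Hz : 0 <= `|z - S - m / 2| <= k.
    apply/andP; split; first exact: normr_ge0.
    rewrite ler_norml; ab.
  apply: le_trans (@Hf_lip R m hm _ _ Hy Hz) _.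
  apply: ler_wpM2l => //.
  apply: le_trans (ler_dist_dist _ _) _.
  have -> : y - S - m / 2 - (z - S - m / 2) = y - z by ring.
  exact: lexx.
apply: (@lip_chain R _ (S + 15 * m / 16)); first ab.
  apply: (@lip_ext R _ _ _ (fun y => - (16 / m) * (y - (S + 7 * m / 8)))).
    move=> y /andP[? ?]; case: (ltP y (S + 15 * m / 16)) => hy.
      rewrite (@dG4 R S m hm); [ring | ab].
    have -> : y = S + 15 * m / 16 by lr.
    rewrite (@dG5 R S m hm); [fld | lr].
  apply: lip_mono (lip_lin _ _ _ _).
  rewrite normrN gtr0_norm //; lr.
apply: (@lip_ext R _ _ _ (fun _ => -1)); last exact: (lip_mono HL (lip_cst _ _ _)).
move=> y /andP[? ?]; rewrite (@dG5 R S m hm) //.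
Qed.

End Fin.

Section Fin2.
Variable R : realType.
Variables (S m c : R).
Hypothesis hm : 0 < m.
Ltac lr := normR R; lra.
Ltac neq0 := apply/eqP => ?; normR R; lra.
Ltac fld := field; try (repeat (apply/andP; split); neq0).
Ltac ab := apply/andP; split; lr.

Lemma G_lb y : S <= y <= S + m -> c - 3 * m / 32 <= G R S m c y.
Proof.
move=> /andP[h0 h1].
case: (ltP y (S + m / 16)) => r1.
  rewrite (@G1 R S m c hm) //=; lr.
case: (ltP y (S + 3 * m / 16)) => r2.
  rewrite (@G2 R S m c hm) /=; last ab.
  have : 0 <= 8 / m * (y - S - m / 8) ^+ 2.
    by apply: mulr_ge0; [apply: divr_ge0; lr | exact: sqr_ge0].
  lr.
case: (ltP y (S + m / 2)) => r3.
  rewrite (@G3 R S m c hm) /=; last ab.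
  have E : expR (5 * m / 16 / (y - S - m / 2) + 1) <= 1.
    rewrite expR_le1.
    have -> : 5 * m / 16 / (y - S - m / 2) + 1 =
      (5 * m / 16 + (y - S - m / 2)) * (y - S - m / 2)^-1 by fld.
    apply: mulr_ge0_le0; first lr.
    by apply: ltW; rewrite invr_lt0; lr.
  have E0 := expR_ge0 (5 * m / 16 / (y - S - m / 2) + 1).
  move: E E0; set E' := expR _ => E E0.
  normR R; nra.
case: (eqVneq y (S + m / 2)) => r4.
  rewrite r4 (@G4 R S m c hm); lr.
have r3' : S + m / 2 < y by rewrite lt_neqAle eq_sym r4 r3.
case: (ltP y (S + 13 * m / 16)) => r5.
  rewrite (@G5 R S m c hm) /=; last ab.
  have : 0 <= 5 * m / 16 * expR (- (5 * m / 16) / (y - S - m / 2) + 1).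
    by apply: mulr_ge0; [lr | exact: expR_ge0].
  lr.
case: (ltP y (S + 15 * m / 16)) => r6.
  rewrite (@G6 R S m c hm) /=; last ab.
  have Q : (y - S - 7 * m / 8) ^+ 2 <= m ^+ 2 / 256.
    have A : 0 <= (m / 16 - (y - S - 7 * m / 8)) * (m / 16 + (y - S - 7 * m / 8)).
      by apply: mulr_ge0; lr.
    have -> : (y - S - 7 * m / 8) ^+ 2 = m ^+ 2 / 256 -
      (m / 16 - (y - S - 7 * m / 8)) * (m / 16 + (y - S - 7 * m / 8)) by fld.
    lr.
  have : 8 / m * (y - S - 7 * m / 8) ^+ 2 <= m / 32.
    have -> : m / 32 = 8 / m * (m ^+ 2 / 256) by fld.
    apply: ler_wpM2l => //; apply: divr_ge0; lr.
  rewrite mulNr; lr.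
rewrite (@G7 R S m c hm) //=; lr.
Qed.

Lemma G_S : G R S m c S = c.
Proof. rewrite (@G1 R S m c hm) /=; [ring | lr]. Qed.

End Fin2.

Lemma SseqS (R : realType) (mm : nat -> R) j : Sseq mm j.+1 = Sseq mm j + mm j.
Proof. by rewrite /Sseq big_ord_recr. Qed.

Ltac lrR R := normR R; lra.
Ltac abR R := apply/andP; split; lrR R.
Ltac decide_if R :=
  match goal with |- context [if ?b then _ else _] =>
    let H := fresh in
    first [ have H : b = true by first [abR R | (apply/eqP; lrR R) | lrR R]
          | have H : b = false by apply/negbTE; first
              [ rewrite negb_and; apply/orP; first [left; rewrite -?leNgt -?ltNge; lrR R | right; rewrite -?leNgt -?ltNge; lrR R]
              | apply/eqP => ?; lrR R ] ];
    rewrite H end.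

Lemma fpiece_G (R : realType) (mm : nat -> R) j (cc x : R) : 0 < mm j ->
  Sseq mm j < x <= Sseq mm j + mm j -> fpiece mm j cc x = G R (Sseq mm j) (mm j) cc x.
Proof.
move=> hm /andP[h0 h1]; rewrite /fpiece /= SseqS.
set Sj := Sseq mm j in h0 h1 *; set mj := mm j in hm h1 *.
case: (ltP x (Sj + mj / 16)) => r1.
  rewrite (@G1 R Sj mj cc hm) //; by repeat decide_if R.
case: (ltP x (Sj + 3 * mj / 16)) => r2.
  rewrite (@G2 R Sj mj cc hm); last abR R. by repeat decide_if R.
case: (ltP x (Sj + mj / 2)) => r3.
  rewrite (@G3 R Sj mj cc hm); last abR R. by repeat decide_if R.
case: (eqVneq x (Sj + mj / 2)) => r4.
  rewrite r4 (@G4 R Sj mj cc hm); by repeat decide_if R.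
have r3' : Sj + mj / 2 < x by rewrite lt_neqAle eq_sym r4 r3.
case: (ltP x (Sj + 13 * mj / 16)) => r5.
  rewrite (@G5 R Sj mj cc hm); last abR R. by repeat decide_if R.
case: (ltP x (Sj + 15 * mj / 16)) => r6.
  rewrite (@G6 R Sj mj cc hm); last abR R. by repeat decide_if R.
rewrite (@G7 R Sj mj cc hm) //; by repeat decide_if R.
Qed.

Theorem proposition5p2 (R : realType) (m : nat -> R)
  (m_pos : forall k, 0 < m k)
  (m_div : (fun n => \sum_(k < n) m k) @ \oo --> +oo)
  (m_to0 : m @ \oo --> 0) (j : nat) :
  let a := Sseq m j in let b := Sseq m j.+1 in let g := fext m j in
  [/\ {within `[a, b], continuous g},
      (forall x, x \in `[a, b] -> cseq m j - 3 * m j / 32 <= g x) &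
      exists df : R -> R,
        [/\ forall x, x \in `]a, b[ -> is_derive x 1 g (df x),
            (fun h => h^-1 * (g (a + h) - g a)) x @[x --> 0^'+] --> df a,
            (fun h => h^-1 * (g (b + h) - g b)) x @[x --> 0^'-] --> df b,
            df a = -1 /\ df b = -1 &
            forall x, x \in `[a, b] -> exists2 d : R, 0 < d &
              exists L : R, forall y z, y \in `[a, b] -> z \in `[a, b] ->
                `|y - x| < d -> `|z - x| < d ->
                `|df y - df z| <= L * `|y - z| ]].
Proof.
move=> a b g.
have hm := m_pos j.
have hb : b = a + m j by rewrite /b /a SseqS.
set c := cseq m j.
set GG := G R a (m j) c.
have GD : forall x : R, is_derive x 1 GG (dG R a (m j) x) := @G_deriv R a (m j) c hm.
have GC : forall x : R, {for x, continuous GG}.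
  move=> x; apply: differentiable_continuous; apply/derivable1_diffP.
  by case: (GD x).
have fjG : forall x, a < x <= a + m j -> fj m j x = GG x.
  move=> x hx; exact: fpiece_G.
have gG : forall x, a <= x <= a + m j -> g x = GG x.
  move=> x /andP[hx1 hx2]; rewrite /g /fext -/a.
  case: eqVneq => hxa.
    rewrite hxa; apply: cvg_lim => //.
    apply: cvg_trans (cvg_at_right_filter (GC a)).
    apply: near_eq_cvg; near=> y.
    have h1 : a < y by near: y; exact: nbhs_right_gt.
    have h2 : y < a + m j by near: y; apply: nbhs_right_lt; normR R; lra.
    by rewrite fjG //; apply/andP; split; normR R; lra.
  rewrite fjG //; apply/andP; split => //.
  by rewrite lt_neqAle eq_sym hxa hx1.
split.
- apply: (@subspace_eq_continuous _ _ _ GG).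
    by move=> x; rewrite inE /= in_itv /= hb => hx; symmetry; apply: gG.
  apply: derivable_within_continuous => x _.
  by case: (GD x).
- move=> x; rewrite ?inE /= ?in_itv /= hb => hx. rewrite gG //.
  exact: G_lb.
exists (dG R a (m j)); split.
- move=> x; rewrite ?inE /= ?in_itv /= hb => hx.
  apply: near_eq_is_derive (GD x).
  apply: (@near_region R a (a + m j)) => // y hy; rewrite gG //.
  by move: hy => /andP[? ?]; apply/andP; split; normR R; lra.
- have := cvg_dnbhs_at_right (@is_derive_quot R _ _ _ (GD a)).
  apply: cvg_trans; apply: near_eq_cvg; near=> h.
  have h1 : 0 < h by near: h; exact: nbhs_right_gt.
  have h2 : h < m j by near: h; apply: nbhs_right_lt; normR R; lra.
  rewrite /quot !gG //; apply/andP; split; normR R; lra.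
- have := cvg_dnbhs_at_left (@is_derive_quot R _ _ _ (GD b)).
  apply: cvg_trans; apply: near_eq_cvg; near=> h.
  have h1 : h < 0 by near: h; exact: nbhs_left_lt.
  have h2 : - m j < h by near: h; apply: nbhs_left_gt; normR R; lra.
  rewrite /quot !gG // hb; apply/andP; split; normR R; lra.
- split.
    rewrite (@dG1 R a (m j) hm) //; normR R; lra.
  rewrite hb (@dG5 R a (m j) hm) //; normR R; lra.
- move=> x _; exists 1 => //; exists (16 / m j + LH R (m j)).
  move=> y z; rewrite ?inE /= !in_itv /= hb => hy hz _ _.
  exact: (@dG_lip R a (m j) hm).
Unshelve. all: by end_near.
Qed.
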